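(* Let $Q=(E_0,E_1,\mathbf U,\boldsymbol\alpha)$ be a quiver representation over $\mathbb{F}_q$, $a,b\in E_0$, $Q'=\Omega(Q,a,b)$, $\pi=\pi^{Q'}_Q$. Let $G\le\operatorname{Aut}(Q)$ and let $B\subseteq\operatorname{End}(Q)$ be preserved by conjugation by $G$. Let $\Xi$ be a complete set of representatives of the $G$-orbits on $\operatorname{Hom}(U_a,U_b)$ (action $\mathbf g\cdot S=g_bSg_a^{-1}$). For $S\in\Xi$ let $Q^S$ be the representation obtained from $Q$ by adding one new arrow $f:a\to b$ with $\alpha_f=S$ (so $\operatorname{End}(Q^S)\subseteq\operatorname{End}(Q)$ and $\operatorname{Aut}(Q^S)\subseteq\operatorname{Aut}(Q)$). Then $$\gamma\big(G^{Q'},\pi^{-1}(B)\big)=\sum_{S\in\Xi}\gamma\big(G\cap\operatorname{Aut}(Q^S),\,B\cap\operatorname{End}(Q^S)\big),$$ all actions being by conjugation.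
   Context: $\gamma(G,X)$ is the number of orbits of a group $G$ on a finite set $X$. A quiver representation $Q=(E_0,E_1,\mathbf U,\boldsymbol\alpha)$: finite sets $E_0$ (vertices), $E_1$ (arrows), source/target maps $\sigma,\tau$, finite-dimensional spaces $U_c$, linear maps $\alpha_e:U_{\sigma(e)}\to U_{\tau(e)}$. $\operatorname{End}(Q)$ is the ring of tuples $(X_c)_{c\in E_0}$ with $\alpha_eX_{\sigma(e)}=X_{\tau(e)}\alpha_e$; $\operatorname{Aut}(Q)$ its unit group, acting by componentwise conjugation. For an extension $Q'$ of $Q$ (vertex set containing $E_0$, same spaces on $E_0$, restrictions of endomorphisms of $Q'$ to $E_0$ are endomorphisms of $Q$), $\pi^{Q'}_Q$ is restriction to $E_0$ and $G^{Q'}=\pi^{-1}(G)\cap\operatorname{Aut}(Q')$. $\Omega(Q,a,b)$ is obtained from $Q$ by adding a vertex $c$ with a space $U'_c$ and arrows $a\to c$, $c\to b$ whose maps form a short exact sequence $0\to U_a\to U'_c\to U_b\to0$. *)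

(* Defs.v *)
From HB Require Import structures.
From mathcomp Require Import all_boot all_order all_algebra.
Set Implicit Arguments. Unset Strict Implicit. Unset Printing Implicit Defensive.
Import GRing.Theory.
Local Open Scope ring_scope.

(* Convention: the space at a
   vertex c is the row space 'rV[F]_(qdim c); the map attached to an arrow e
   is v |-> v *m qmap e, with qmap e : 'M_(qdim (qsrc e), qdim (qtgt e)).   *)
Record qrep (F : finFieldType) := QRep {
  qV : finType;
  qE : finType;
  qsrc : qE -> qV;
  qtgt : qE -> qV;
  qdim : qV -> nat;
  qmap : forall e : qE, 'M[F]_(qdim (qsrc e), qdim (qtgt e))
}.

Section Quiver.
Variable F : finFieldType.

Definition dtuples (V : finType) (d : V -> nat) :=
  {dffun forall c : V, 'M[F]_(d c)}.

Definition qtuples (Q : qrep F) := dtuples (@qdim F Q).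

(* End(Q): alpha_e X_{sigma e} = X_{tau e} alpha_e, in row convention *)
Definition isEnd (Q : qrep F) (X : qtuples Q) : bool :=
  [forall e : qE Q, X (qsrc e) *m qmap e == qmap e *m X (qtgt e)].

Definition EndQ (Q : qrep F) : {set qtuples Q} := [set X | isEnd X].

(* Aut(Q): the units of End(Q), i.e. endomorphisms with every component
   invertible (the inverse is then automatically an endomorphism). *)
Definition AutQ (Q : qrep F) : {set qtuples Q} :=
  [set X | isEnd X && [forall c, X c \in unitmx]].

Definition tup1 (Q : qrep F) : qtuples Q :=
  [ffun c => (1%:M : 'M[F]_(@qdim _ Q c))].
Definition tupmul (Q : qrep F) (g h : qtuples Q) : qtuples Q :=
  [ffun c => g c *m h c].
Definition tupinv (Q : qrep F) (g : qtuples Q) : qtuples Q :=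
  [ffun c => invmx (g c)].

(* conjugation X |-> g X g^{-1} (componentwise); in row convention the
   matrix of g_c o X_c o g_c^{-1} is invmx g_c *m X_c *m g_c. *)
Definition tupconj (Q : qrep F) (g X : qtuples Q) : qtuples Q :=
  [ffun c => invmx (g c) *m X c *m g c].

Definition is_subgroup (Q : qrep F) (G : {set qtuples Q}) : Prop :=
  [/\ tup1 Q \in G,
      (forall g h, g \in G -> h \in G -> tupmul g h \in G) &
      (forall g, g \in G -> tupinv g \in G)].

Definition gamma (Q : qrep F) (G X : {set qtuples Q}) : nat :=
  #|[set [set tupconj g Z | g in G] | Z in X]|.

(* Omega(Q,a,b): new vertex None with space of dimension n, new arrows
   inr true : a -> None with map i, inr false : None -> b with map p. *)
Section Omega.
Variables (Q : qrep F) (a b : qV Q) (n : nat)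
          (i : 'M[F]_(@qdim _ Q a, n)) (p : 'M[F]_(n, @qdim _ Q b)).

Definition om_src (e : qE Q + bool) : option (qV Q) :=
  match e with inl e => Some (qsrc e) | inr true => Some a | inr false => None end.
Definition om_tgt (e : qE Q + bool) : option (qV Q) :=
  match e with inl e => Some (qtgt e) | inr true => None | inr false => Some b end.
Definition om_dim (c : option (qV Q)) : nat :=
  match c with Some c => @qdim _ Q c | None => n end.
Definition om_map (e : qE Q + bool) : 'M[F]_(om_dim (om_src e), om_dim (om_tgt e)) :=
  match e as e' return 'M[F]_(om_dim (om_src e'), om_dim (om_tgt e')) with
  | inl e => qmap e
  | inr true => i
  | inr false => p
  end.

Definition Omega : qrep F := @QRep F _ _ om_src om_tgt om_dim om_map.

Definition restrict (X : qtuples Omega) : qtuples Q :=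
  [ffun c => (X (Some c) : 'M[F]_(@qdim _ Q c))].
End Omega.

Section AddArrow.
Variables (Q : qrep F) (a b : qV Q) (S : 'M[F]_(@qdim _ Q a, @qdim _ Q b)).
Definition aa_src (e : option (qE Q)) : qV Q :=
  match e with Some e => qsrc e | None => a end.
Definition aa_tgt (e : option (qE Q)) : qV Q :=
  match e with Some e => qtgt e | None => b end.
Definition aa_map (e : option (qE Q)) : 'M[F]_(@qdim _ Q (aa_src e), @qdim _ Q (aa_tgt e)) :=
  match e as e' return 'M[F]_(@qdim _ Q (aa_src e'), @qdim _ Q (aa_tgt e')) with
  | Some e => qmap e
  | None => S
  end.
Definition addArrow : qrep F := @QRep F (qV Q) _ aa_src aa_tgt (@qdim F Q) aa_map.
End AddArrow.

(* action of tuples on Hom(U_a, U_b): g . S = g_b S g_a^{-1} *)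
Definition homAct (Q : qrep F) (a b : qV Q) (g : qtuples Q)
  (S : 'M[F]_(@qdim _ Q a, @qdim _ Q b)) : 'M[F]_(@qdim _ Q a, @qdim _ Q b) :=
  invmx (g a) *m S *m g b.

Definition is_orbit_transversal (Q : qrep F) (a b : qV Q) (G : {set qtuples Q})
  (Xi : {set 'M[F]_(@qdim _ Q a, @qdim _ Q b)}) : Prop :=
  (forall S', exists2 S, S \in Xi & exists2 g, g \in G & S' = homAct g S) /\
  (forall S1 S2, S1 \in Xi -> S2 \in Xi ->
     (exists2 g, g \in G & S2 = homAct g S1) -> S1 = S2).

End Quiver.

(* Main.v *)
Require Import Defs.
From HB Require Import structures.
From mathcomp Require Import all_boot all_order all_algebra.
Set Implicit Arguments. Unset Strict Implicit. Unset Printing Implicit Defensive.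
Import GRing.Theory.
Local Open Scope ring_scope.
Lemma card_set_sum (T : finType) (A : {set T}) (P : pred T) :
  #|[set x in A | P x]| = (\sum_(x in A) P x)%N.
Proof.
rewrite -sum1_card big_mkcond [RHS]big_mkcond; apply: eq_bigr => x _.
by rewrite inE; case: (x \in A); case: (P x).
Qed.

Lemma card_setT_sum (T : finType) (P : pred T) :
  #|[set x | P x]| = (\sum_x P x)%N.
Proof.
rewrite -sum1_card big_mkcond [RHS]big_mkcond; apply: eq_bigr => x _.
by rewrite inE; case: (P x).
Qed.

Lemma orbit_stab (M T : finType) (mul : M -> M -> M) (inv : M -> M) (one : M)
  (G : {set M}) (act : T -> M -> T) :
  {in G &, forall g h, mul g h \in G} -> {in G, forall g, inv g \in G} ->
  (forall g h k, mul g (mul h k) = mul (mul g h) k) -> (forall g, mul g one = g) ->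
  {in G, forall g, mul g (inv g) = one} -> {in G, forall g, mul (inv g) g = one} ->
  (forall x, act x one = x) ->
  (forall x, {in G &, forall g h, act x (mul g h) = act (act x g) h}) ->
  forall x, (#|[set g in G | act x g == x]| * #|[set act x g | g in G]| = #|G|)%N.
Proof.
move=> GM GI mA m1 mV Vm a1 aM x.
rewrite -[RHS]sum1_card (partition_big_imset (fun g => act x g)) /= [LHS]mulnC -sum_nat_const.
apply: eq_bigr => y /imsetP[h Gh ->].
rewrite sum1_card.
have -> : [set g in G | act x g == x] =
   [set mul g (inv h) | g in [set g in G | act x g == act x h]].
  apply/setP => k; rewrite inE; apply/andP/imsetP.
  - case=> Gk /eqP axk; exists (mul k h); last by rewrite -mA mV // m1.
    by rewrite inE GM //= aM // axk eqxx.
  - case=> g; rewrite inE => /andP[Gg /eqP axg] ->.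
    split; first by rewrite GM ?GI.
    by rewrite aM ?GI // axg -aM ?GI // mV // a1.
rewrite card_in_imset; first by apply: eq_card => g; rewrite !inE.
move=> g1 g2 _ _ /(congr1 (fun z => mul z h)).
by rewrite -!mA !Vm // !m1.
Qed.

Lemma burnside (M T : finType) (mul : M -> M -> M) (inv : M -> M) (one : M)
  (G : {set M}) (act : T -> M -> T) (X : {set T}) :
  one \in G ->
  {in G &, forall g h, mul g h \in G} -> {in G, forall g, inv g \in G} ->
  (forall g h k, mul g (mul h k) = mul (mul g h) k) -> (forall g, mul g one = g) ->
  {in G, forall g, mul g (inv g) = one} -> {in G, forall g, mul (inv g) g = one} ->
  (forall x, act x one = x) ->
  (forall x, {in G &, forall g h, act x (mul g h) = act (act x g) h}) ->
  {in X & G, forall x g, act x g \in X} ->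
  (#|[set [set act x g | g in G] | x in X]| * #|G| =
     \sum_(g in G) #|[set x in X | act x g == x]|)%N.
Proof.
move=> G1 GM GI mA m1 mV Vm a1 aM XG.
have orbS x : x \in X -> [set act x g | g in G] \subset X.
  by move=> Xx; apply/subsetP=> y /imsetP[g Gg ->]; apply: XG.
have orbeq x y : x \in X -> y \in [set act x g | g in G] ->
    [set act y g | g in G] = [set act x g | g in G].
  move=> Xx /imsetP[h Gh ->]; apply/setP=> z; apply/imsetP/imsetP.
  - by case=> g Gg ->; exists (mul h g); rewrite ?GM ?aM.
  - case=> g Gg ->; exists (mul (inv h) g); rewrite ?GM ?GI //.
    by rewrite -aM ?GM ?GI // mA mV // -(mV g) // -mA Vm // m1.
have xin x : x \in [set act x g | g in G] by apply/imsetP; exists one; rewrite ?a1.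
transitivity (\sum_(x in X) #|[set g in G | act x g == x]|)%N; last first.
  under eq_bigr do rewrite card_set_sum.
  under [RHS]eq_bigr do rewrite card_set_sum.
  exact: exchange_big.
rewrite (partition_big_imset (fun x => [set act x g | g in G])) /=.
rewrite -sum_nat_const; apply: eq_bigr => O /imsetP[x0 Xx0 ->].
set O0 := [set act x0 g | g in G].
have -> : (\sum_(x in X | [set act x g | g in G] == O0)
       #|[set g in G | act x g == x]| = \sum_(x in O0) #|[set g in G | act x g == x]|)%N.
  apply: eq_bigl => x; apply/andP/idP.
  - by case=> _ /eqP <-.
  - move=> xO; split; first by apply: (subsetP (orbS _ Xx0)).
    by rewrite (orbeq x0 x).
have Opos : (0 < #|O0|)%N by apply/card_gt0P; exists x0.
apply/eqP; rewrite -(eqn_pmul2r Opos) big_distrl /=; apply/eqP.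
rewrite (eq_bigr (fun _ => #|G|)); first by rewrite sum_nat_const mulnC.
move=> x xO; rewrite /O0 -(orbeq x0 x Xx0 xO).
exact: (orbit_stab GM GI mA m1 mV Vm a1 aM).
Qed.
Lemma invmx_intertw (F : fieldType) m k (A : 'M[F]_m) (B : 'M[F]_k) (N : 'M[F]_(m, k)) :
  A \in unitmx -> B \in unitmx -> A *m N = N *m B -> invmx A *m N = N *m invmx B.
Proof.
move=> uA uB h.
have := congr1 (fun z => invmx A *m z *m invmx B) h => /=.
by rewrite mulKmx // !mulmxA mulmxK // => <-.
Qed.

Lemma invmxM (F : fieldType) n (A B : 'M[F]_n) : A \in unitmx -> B \in unitmx ->
  invmx (A *m B) = invmx B *m invmx A.
Proof.
move=> uA uB; have uAB : A *m B \in unitmx by rewrite unitmx_mul uA uB.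
rewrite -[RHS]mul1mx -(mulVmx uAB) -!mulmxA (mulmxA B) mulmxV // mul1mx.
by rewrite mulmxV // mulmx1.
Qed.

Section QG.
Variable F : finFieldType.
Implicit Types Q : qrep F.

Lemma inAut Q (g : qtuples Q) : (g \in AutQ Q) = isEnd g && [forall c, g c \in unitmx].
Proof. by rewrite inE. Qed.

Lemma inEnd Q (g : qtuples Q) : (g \in EndQ Q) = isEnd g.
Proof. by rewrite inE. Qed.

Lemma isEndP Q (X : qtuples Q) :
  reflect (forall e, X (qsrc e) *m qmap e = qmap e *m X (qtgt e)) (isEnd X).
Proof.
by apply: (iffP forallP) => h e; apply/eqP; apply: h.
Qed.

Lemma Aut_unit Q (g : qtuples Q) c : g \in AutQ Q -> g c \in unitmx.
Proof. by rewrite inAut => /andP[_ /forallP]. Qed.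

Lemma Aut_End Q (g : qtuples Q) : g \in AutQ Q -> isEnd g.
Proof. by rewrite inAut => /andP[]. Qed.

Lemma tupmulA Q (g h k : qtuples Q) : tupmul g (tupmul h k) = tupmul (tupmul g h) k.
Proof. by apply/ffunP => c; rewrite !ffunE mulmxA. Qed.

Lemma tup1mul Q (g : qtuples Q) : tupmul (tup1 Q) g = g.
Proof. by apply/ffunP => c; rewrite !ffunE mul1mx. Qed.

Lemma tupmul1 Q (g : qtuples Q) : tupmul g (tup1 Q) = g.
Proof. by apply/ffunP => c; rewrite !ffunE mulmx1. Qed.

Lemma tupmulV Q (g : qtuples Q) : g \in AutQ Q -> tupmul g (tupinv g) = tup1 Q.
Proof. by move=> gA; apply/ffunP => c; rewrite !ffunE mulmxV // Aut_unit. Qed.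

Lemma tupVmul Q (g : qtuples Q) : g \in AutQ Q -> tupmul (tupinv g) g = tup1 Q.
Proof. by move=> gA; apply/ffunP => c; rewrite !ffunE mulVmx // Aut_unit. Qed.

Lemma tupconj1 Q (X : qtuples Q) : tupconj (tup1 Q) X = X.
Proof. by apply/ffunP => c; rewrite !ffunE invmx1 mul1mx mulmx1. Qed.

Lemma tupconjM Q (g h X : qtuples Q) : g \in AutQ Q -> h \in AutQ Q ->
  tupconj (tupmul g h) X = tupconj h (tupconj g X).
Proof.
move=> gA hA; apply/ffunP => c; rewrite !ffunE invmxM ?Aut_unit //.
by rewrite !mulmxA.
Qed.

Lemma End_mul Q (g h : qtuples Q) : isEnd g -> isEnd h -> isEnd (tupmul g h).
Proof.
move=> /isEndP Eg /isEndP Eh; apply/isEndP => e; rewrite !ffunE.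
by rewrite -mulmxA Eh mulmxA Eg mulmxA.
Qed.

Lemma Aut_mul Q (g h : qtuples Q) : g \in AutQ Q -> h \in AutQ Q -> tupmul g h \in AutQ Q.
Proof.
move=> gA hA; rewrite inAut End_mul ?Aut_End //=; apply/forallP => c.
by rewrite ffunE unitmx_mul !Aut_unit.
Qed.

Lemma Aut_inv Q (g : qtuples Q) : g \in AutQ Q -> tupinv g \in AutQ Q.
Proof.
move=> gA; rewrite inAut; apply/andP; split.
  apply/isEndP => e; rewrite !ffunE; apply: invmx_intertw; rewrite ?Aut_unit //.
  by move/isEndP: (Aut_End gA).
by apply/forallP => c; rewrite ffunE unitmx_inv Aut_unit.
Qed.

Lemma Aut_1 Q : tup1 Q \in AutQ Q.
Proof.
rewrite inAut; apply/andP; split.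
  by apply/isEndP => e; rewrite !ffunE mul1mx mulmx1.
by apply/forallP => c; rewrite ffunE unitmx1.
Qed.

Lemma End_conj Q (g X : qtuples Q) : g \in AutQ Q -> isEnd X -> isEnd (tupconj g X).
Proof.
move=> gA /isEndP EX; have /isEndP Eg := Aut_End gA.
apply/isEndP => e; rewrite !ffunE.
have Ei := invmx_intertw (Aut_unit (qsrc e) gA) (Aut_unit (qtgt e) gA) (Eg e).
rewrite -!mulmxA Eg !mulmxA -Ei -!mulmxA.
by rewrite (mulmxA (X (qsrc e))) EX -mulmxA.
Qed.

Lemma burnsideQ Q (G X : {set qtuples Q}) : G \subset AutQ Q -> is_subgroup G ->
  {in X & G, forall x g, tupconj g x \in X} ->
  (gamma G X * #|G| = \sum_(g in G) #|[set x in X | tupconj g x == x]|)%N.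
Proof.
move=> /subsetP GA [G1 GM GI] XG.
exact: (@burnside _ _ (@tupmul F Q) (@tupinv F Q) (tup1 Q) G (fun x g => tupconj g x) X
  G1 GM GI (@tupmulA Q) (@tupmul1 Q) (fun g Gg => tupmulV (GA g Gg))
  (fun g Gg => tupVmul (GA g Gg)) (@tupconj1 Q)
  (fun x g h Gg Gh => tupconjM x (GA g Gg) (GA h Gh)) XG).
Qed.

Lemma homActM Q (a b : qV Q) (g h : qtuples Q) (S : 'M[F]_(qdim a, qdim b)) : g \in AutQ Q -> h \in AutQ Q ->
  homAct (tupmul g h) S = homAct h (homAct g S).
Proof.
move=> gA hA; rewrite /homAct !ffunE invmxM ?Aut_unit //.
by rewrite !mulmxA.
Qed.

Lemma homAct1 Q (a b : qV Q) (S : 'M[F]_(qdim a, qdim b)) : homAct (tup1 Q) S = S :> 'M_(qdim a, qdim b).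
Proof. by rewrite /homAct !ffunE invmx1 mul1mx mulmx1. Qed.

Lemma orbit_stabH Q (a b : qV Q) (G : {set qtuples Q}) (S : 'M[F]_(qdim a, qdim b)) : G \subset AutQ Q -> is_subgroup G ->
  (#|[set g in G | homAct g S == S]| * #|[set homAct g S | g in G]| = #|G|)%N.
Proof.
move=> /subsetP GA [G1 GM GI].
exact: (@orbit_stab _ _ (@tupmul F Q) (@tupinv F Q) (tup1 Q) G
  (fun (x : 'M_(qdim a, qdim b)) g => homAct g x)
  GM GI (@tupmulA Q) (@tupmul1 Q) (fun g Gg => tupmulV (GA g Gg))
  (fun g Gg => tupVmul (GA g Gg)) (@homAct1 Q a b)
  (fun x g h Gg Gh => homActM x (GA g Gg) (GA h Gh)) S).
Qed.

End QG.
Lemma delta_mulE (R : comRingType) m n p (i : 'I_m) (j : 'I_n) (A : 'M[R]_(n, p)) i' j' :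
  (delta_mx i j *m A) i' j' = (i' == i)%:R * A j j'.
Proof.
rewrite mxE (bigD1 j) //= big1 => [|k /negbTE nkj]; last by rewrite mxE nkj andbF mul0r.
by rewrite mxE eqxx andbT addr0.
Qed.

Lemma mul_deltaE (R : comRingType) m n p (A : 'M[R]_(m, n)) (i : 'I_n) (j : 'I_p) i' j' :
  (A *m delta_mx i j) i' j' = A i' i * (j' == j)%:R.
Proof.
rewrite mxE (bigD1 i) //= big1 => [|k /negbTE nki]; last by rewrite mxE nki mulr0.
by rewrite mxE eqxx addr0.
Qed.

Lemma lin_mxE (R : comRingType) m1 n1 m2 n2 (f : 'M[R]_(m1, n1) -> 'M[R]_(m2, n2)) i j i' j' :
  lin_mx f (mxvec_index i j) (mxvec_index i' j') = f (delta_mx i j) i' j'.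
Proof. by rewrite /lin_mx mxE /= vec_mx_delta mxvecE. Qed.

Lemma tr_lin_mulmxr (R : comRingType) m n (A : 'M[R]_n) :
  (@lin_mulmxr R m n n A)^T = lin_mulmxr A^T.
Proof.
apply/matrixP => k l; rewrite mxE.
case/mxvec_indexP: k => i j; case/mxvec_indexP: l => i' j'.
rewrite /lin_mulmxr !lin_mxE /= !delta_mulE mxE.
by rewrite eq_sym.
Qed.

Lemma tr_lin_mulmx (R : comRingType) m n (B : 'M[R]_m) :
  (@lin_mulmx R m m n B)^T = lin_mulmx B^T.
Proof.
apply/matrixP => k l; rewrite mxE.
case/mxvec_indexP: k => i j; case/mxvec_indexP: l => i' j'.
rewrite /lin_mulmx !lin_mxE /= !mul_deltaE mxE.
by rewrite eq_sym.
Qed.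
Lemma card_ker (F : finFieldType) m k (M : 'M[F]_(m, k)) :
  #|[set v : 'rV[F]_m | v *m M == 0]| = (#|F| ^ (m - \rank M))%N.
Proof.
have -> : [set v : 'rV[F]_m | v *m M == 0] =
    (fun u : 'rV_(\rank (kermx M)) => u *m row_base (kermx M)) @: setT.
  apply/setP => v; rewrite inE; apply/idP/imsetP.
  - rewrite -sub_kermx -(eq_row_base (kermx M)) => /submxP[u ->].
    by exists u; rewrite ?inE.
  - case=> u _ ->; rewrite -sub_kermx; apply: (submx_trans (submxMl _ _)).
    by rewrite eq_row_base.
rewrite card_imset; last by apply: row_free_inj; exact: row_base_free.
by rewrite cardsT card_mx mul1n mxrank_ker.
Qed.

Lemma trmx_eq0' (R : nmodType) m n (A : 'M[R]_(m, n)) : (A^T == 0) = (A == 0).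
Proof. by rewrite -(inj_eq (@trmx_inj _ _ _)) trmxK trmx0. Qed.

Lemma subsub_eq0 (V : zmodType) (x y z w : V) : (x - y + (z - w) == 0) = (x + z == y + w).
Proof. by rewrite addrACA -opprD subr_eq0. Qed.

Lemma count_lin (F : finFieldType) da db (A1 A2 : 'M[F]_da) (B1 B2 : 'M[F]_db) :
  #|[set TZ : 'M[F]_(db, da) * 'M[F]_(db, da) |
      TZ.1 *m A1 + B2 *m TZ.2 == B1 *m TZ.1 + TZ.2 *m A2]|
  = (#|F| ^ (db * da) *
     #|[set S : 'M[F]_(da, db) | (A1 *m S == S *m B1) && (A2 *m S == S *m B2)]|)%N.
Proof.
pose C1 : 'M[F]_(db * da) := lin_mulmxr A1 - lin_mulmx B1.
pose C2 : 'M[F]_(db * da) := lin_mulmx B2 - lin_mulmxr A2.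
pose C := col_mx C1 C2.
pose f (TZ : 'M[F]_(db, da) * 'M[F]_(db, da)) := row_mx (mxvec TZ.1) (mxvec TZ.2).
have finj : injective f.
  move=> [T1 Z1] [T2 Z2]; rewrite /f /= => /eq_row_mx [/(can_inj mxvecK) E1 /(can_inj mxvecK) E2].
  by rewrite E1 E2.
have fC TZ : f TZ *m C = mxvec (TZ.1 *m A1 - B1 *m TZ.1 + (B2 *m TZ.2 - TZ.2 *m A2)).
  rewrite mul_row_col !mulmxBr !mul_vec_lin /=.
  by rewrite [RHS]linearD !linearB.
have L : #|[set TZ : 'M[F]_(db, da) * 'M[F]_(db, da) |
      TZ.1 *m A1 + B2 *m TZ.2 == B1 *m TZ.1 + TZ.2 *m A2]| =
      #|[set w : 'rV[F]_(db * da + db * da) | w *m C == 0]|.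
  rewrite -(card_imset _ finj); apply: eq_card => w; rewrite [in RHS]inE.
  apply/imsetP/idP.
  - by case=> TZ; rewrite inE => H ->; rewrite fC mxvec_eq0 subsub_eq0.
  - move=> H; exists (vec_mx (lsubmx w), vec_mx (rsubmx w)).
      by rewrite inE -subsub_eq0 -mxvec_eq0 -fC /f /= !vec_mxK hsubmxK.
    by rewrite /f /= !vec_mxK hsubmxK.
pose g (S : 'M[F]_(da, db)) := mxvec S^T.
have ginj : injective g by move=> S1 S2 /(can_inj mxvecK) /trmx_inj.
have gC S : g S *m C^T = row_mx (mxvec (A1 *m S - S *m B1)^T) (mxvec (S *m B2 - A2 *m S)^T).
  rewrite tr_col_mx mul_mx_row !linearB /= tr_lin_mulmxr tr_lin_mulmx.
  rewrite tr_lin_mulmxr tr_lin_mulmx /g !mul_vec_lin /=.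
  by rewrite !trmx_mul.
have R : #|[set S : 'M[F]_(da, db) | (A1 *m S == S *m B1) && (A2 *m S == S *m B2)]| =
      #|[set v : 'rV[F]_(db * da) | v *m C^T == 0]|.
  rewrite -(card_imset _ ginj); apply: eq_card => v; rewrite [in RHS]inE.
  apply/imsetP/idP.
  - case=> S0; rewrite inE => H ->.
    move/andP: H => [/eqP H1 /eqP H2].
    by rewrite gC row_mx_eq0 !mxvec_eq0 !trmx_eq0' !subr_eq0 H1 H2 !eqxx.
  - move=> H; exists (vec_mx v)^T; last by rewrite /g trmxK vec_mxK.
    move: H; rewrite -{1}[v](vec_mxK) -[vec_mx v]trmxK.
    rewrite -/(g _) gC row_mx_eq0 !mxvec_eq0 !trmx_eq0' !subr_eq0 inE.
    by rewrite !trmxK => /andP[-> /eqP ->]; rewrite eqxx.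
apply: (eq_trans L); apply: (eq_trans (card_ker C)); apply: esym.
apply: (eq_trans (congr1 (fun k => #|F| ^ (db * da) * k)%N R)).
rewrite card_ker mxrank_tr -expnD; congr (_ ^ _)%N.
by rewrite addnBA // rank_leq_col.
Qed.
Section Om.
Variables (F : finFieldType) (Q : qrep F) (a b : qV Q) (n : nat)
  (i : 'M[F]_(qdim a, n)) (p : 'M[F]_(n, qdim b))
  (j : 'M[F]_(n, qdim a)) (s : 'M[F]_(qdim b, n)).
Hypotheses (ij : i *m j = 1%:M) (sp : s *m p = 1%:M) (ip : i *m p = 0) (sj : s *m j = 0)
  (jips : j *m i + p *m s = 1%:M).

Local Notation da := (qdim a).
Local Notation db := (qdim b).

Definition Mof (A : 'M[F]_da) (T : 'M[F]_(db, da)) (B : 'M[F]_db) : 'M[F]_n :=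
  j *m A *m i + p *m T *m i + p *m B *m s.

Lemma ijR m (X : 'M[F]_(m, da)) : X *m i *m j = X.
Proof. by rewrite -mulmxA ij mulmx1. Qed.
Lemma spR m (X : 'M[F]_(m, db)) : X *m s *m p = X.
Proof. by rewrite -mulmxA sp mulmx1. Qed.
Lemma ipR m (X : 'M[F]_(m, da)) : X *m i *m p = 0.
Proof. by rewrite -mulmxA ip mulmx0. Qed.
Lemma sjR m (X : 'M[F]_(m, db)) : X *m s *m j = 0.
Proof. by rewrite -mulmxA sj mulmx0. Qed.

Lemma Mof_mul A T B A' T' B' :
  Mof A T B *m Mof A' T' B' = Mof (A *m A') (T *m A' + B *m T') (B *m B').
Proof.
rewrite /Mof !mulmxDl !mulmxDr !mulmxA !ijR !ipR !spR !sjR.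
rewrite !mul0mx !addr0 !add0r.
by rewrite mulmxDl !addrA.
Qed.

Lemma Mof_i A T B : i *m Mof A T B = A *m i.
Proof.
rewrite /Mof !mulmxDr !mulmxA ij ip !mul0mx !addr0.
by rewrite mul1mx.
Qed.

Lemma Mof_p A T B : Mof A T B *m p = p *m B.
Proof. by rewrite /Mof !mulmxDl !ipR !spR !add0r. Qed.

Lemma Mof_sj A T B : s *m Mof A T B *m j = T.
Proof.
rewrite /Mof !mulmxDr !mulmxDl !mulmxA sj sp !mul0mx !ijR !sjR.
by rewrite mul1mx add0r addr0.
Qed.

Lemma Mof_ij A T B : i *m Mof A T B *m j = A.
Proof. by rewrite Mof_i ijR. Qed.

Lemma Mof_sp A T B : s *m Mof A T B *m p = B.
Proof. by rewrite -mulmxA Mof_p mulmxA sp mul1mx. Qed.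

Lemma Mof_inj A T B A' T' B' : Mof A T B = Mof A' T' B' -> [/\ A = A', T = T' & B = B'].
Proof.
move=> E; split.
- by rewrite -(Mof_ij A T B) E Mof_ij.
- by rewrite -(Mof_sj A T B) E Mof_sj.
- by rewrite -(Mof_sp A T B) E Mof_sp.
Qed.

Lemma Mof_1 : Mof 1%:M 0 1%:M = 1%:M.
Proof. by rewrite /Mof !mulmx1 mulmx0 mul0mx addr0. Qed.

Lemma Mof_unit A T B : A \in unitmx -> B \in unitmx -> Mof A T B \in unitmx.
Proof.
move=> uA uB.
have E : Mof A T B *m Mof (invmx A) (- (invmx B *m T *m invmx A)) (invmx B) = 1%:M.
  rewrite Mof_mul !mulmxV // mulmxN !mulmxA mulmxV // mul1mx subrr.
  exact: Mof_1.
by case: (mulmx1_unit E).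
Qed.

Lemma int_Mof A B (Y : 'M[F]_n) : A *m i = i *m Y -> Y *m p = p *m B ->
  Y = Mof A (s *m Y *m j) B.
Proof.
move=> Hi Hp.
have E1 : Y = j *m (A *m i) + p *m (s *m Y).
  by rewrite Hi !mulmxA -mulmxDl jips mul1mx.
have E2 : s *m Y = s *m Y *m j *m i + B *m s.
  rewrite -[LHS]mulmx1 -jips mulmxDr !mulmxA -(mulmxA s Y p) Hp.
  by rewrite (mulmxA s p) sp mul1mx.
by rewrite {1}E1 {1}E2 mulmxDr /Mof !mulmxA addrA.
Qed.

Local Notation Q' := (Omega i p).
Local Notation res := (@restrict F Q a b n i p).

Definition ext (g : qtuples Q) (H : 'M[F]_n) : qtuples Q' :=
  finfun (fun c : option (qV Q) =>
    match c as c' return 'M[F]_(@qdim _ Q' c') with Some c0 => g c0 | None => H end).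

Definition extT (g : qtuples Q) (T : 'M[F]_(db, da)) : qtuples Q' := ext g (Mof (g a) T (g b)).

Lemma res_ext g H : res (ext g H) = g.
Proof. by apply/ffunP => c; rewrite !ffunE. Qed.

Lemma ext_None g H : ext g H None = H.
Proof. by rewrite ffunE. Qed.

Lemma ext_res (X : qtuples Q') : X = ext (res X) (X None).
Proof. by apply/ffunP => -[c|]; rewrite !ffunE. Qed.

Lemma resE (X : qtuples Q') c : res X c = X (Some c).
Proof. by rewrite ffunE. Qed.

Lemma isEnd_Om (X : qtuples Q') :
  isEnd X = [&& isEnd (res X), X (Some a) *m i == i *m X None & X None *m p == p *m X (Some b)].
Proof.
apply/isEndP/and3P.
- move=> h; split.
  + by apply/isEndP => e; rewrite !resE; apply: (h (inl e)).
  + by apply/eqP; apply: (h (inr true)).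
  + by apply/eqP; apply: (h (inr false)).
- case=> /isEndP h /eqP h1 /eqP h2 [e|[]] //=.
  by have := h e; rewrite !resE.
Qed.

Lemma inAut_Om (X : qtuples Q') :
  (X \in AutQ Q') = [&& res X \in AutQ Q, X (Some a) *m i == i *m X None,
     X None *m p == p *m X (Some b) & X None \in unitmx].
Proof.
rewrite !inAut isEnd_Om; apply/andP/and4P.
- case=> /and3P[E1 E2 E3] /forallP U; split=> //.
  by rewrite E1 /=; apply/forallP => c; rewrite resE (U (Some c)).
- case=> /andP[E1 /forallP U] E2 E3 U0; split; first by rewrite E1 E2 E3.
  by apply/forallP => -[c|] //; rewrite -resE U.
Qed.

Lemma res_mul (g h : qtuples Q') : res (tupmul g h) = tupmul (res g) (res h).
Proof. by apply/ffunP => c; rewrite !ffunE. Qed.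
Lemma res_inv (g : qtuples Q') : res (tupinv g) = tupinv (res g).
Proof. by apply/ffunP => c; rewrite !ffunE. Qed.
Lemma res_conj (g X : qtuples Q') : res (tupconj g X) = tupconj (res g) (res X).
Proof. by apply/ffunP => c; rewrite !ffunE. Qed.
Lemma res_1 : res (tup1 Q') = tup1 Q.
Proof. by apply/ffunP => c; rewrite !ffunE. Qed.

Lemma extT_inj g : injective (extT g).
Proof.
move=> T1 T2 E; have := congr1 (fun X : qtuples Q' => X None) E; rewrite /= /extT !ext_None.
by case/Mof_inj.
Qed.

Lemma fiberE (g : qtuples Q) : isEnd g ->
  [set X in EndQ Q' | res X == g] = extT g @: setT.
Proof.
move=> Eg; apply/setP => X; rewrite !inE; apply/andP/imsetP.
- case; rewrite isEnd_Om => /and3P[_ /eqP h1 /eqP h2] /eqP rX.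
  exists (s *m X None *m j) => //.
  rewrite {1}(ext_res X) /extT rX; congr ext.
  by apply: int_Mof; rewrite -rX !resE.
- case=> T _ ->; rewrite isEnd_Om /extT res_ext Eg ext_None !ffunE.
  by rewrite Mof_i Mof_p !eqxx.
Qed.

Lemma fiberA (g : qtuples Q) : g \in AutQ Q ->
  [set X in AutQ Q' | res X == g] = extT g @: setT.
Proof.
move=> Ag; rewrite -(fiberE (Aut_End Ag)); apply/setP => X.
rewrite [X \in [set _ in AutQ _ | _]]in_set [X \in [set _ in EndQ _ | _]]in_set inEnd.
rewrite inAut_Om isEnd_Om; apply/andP/andP.
- by case=> /and4P[/Aut_End -> -> -> _].
- case=> /and3P[_ h1 h2] /eqP rX; split; last by rewrite rX.
  rewrite rX Ag h1 h2 /=.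
  have /eqP h1' := h1; have /eqP h2' := h2.
  rewrite (int_Mof h1' h2').
  by apply: Mof_unit; rewrite -resE rX Aut_unit.
Qed.


Lemma tuple_eq_Om (X Y : qtuples Q') : (X == Y) = (res X == res Y) && (X None == Y None).
Proof.
apply/eqP/andP => [->|[/eqP h /eqP h0]]; first by rewrite !eqxx.
by rewrite (ext_res X) (ext_res Y) h h0.
Qed.

Lemma conj_fix_comm (g X : qtuples Q) c : g \in AutQ Q -> tupconj g X = X ->
  g c *m X c = X c *m g c.
Proof.
move=> Ag /ffunP /(_ c); rewrite ffunE => E.
by rewrite -{1}E !mulmxA mulmxV ?Aut_unit // mul1mx.
Qed.

Lemma conj_eq_comm m (H Y : 'M[F]_m) : H \in unitmx -> (invmx H *m Y *m H == Y) = (H *m Y == Y *m H).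
Proof.
move=> uH; apply/eqP/eqP => E.
  by rewrite -{1}E !mulmxA mulmxV // mul1mx.
by rewrite -mulmxA -E mulKmx.
Qed.

Lemma fixcond (g X : qtuples Q) T Z : g \in AutQ Q ->
  (tupconj (extT g T) (extT X Z) == extT X Z) =
  (tupconj g X == X) && (T *m X a + g b *m Z == X b *m T + Z *m g a).
Proof.
move=> Ag; rewrite tuple_eq_Om res_conj /extT !res_ext ffunE !ext_None.
rewrite conj_eq_comm ?Mof_unit ?Aut_unit // !Mof_mul.
case: eqP => [E|] //=.
rewrite (conj_fix_comm a Ag E) (conj_fix_comm b Ag E).
apply/eqP/eqP => [/Mof_inj [_ -> _] | ->]; first by rewrite addrC.
by rewrite addrC.
Qed.
Lemma sum_fiberA (G : {set qtuples Q}) (phi : qtuples Q' -> nat) : G \subset AutQ Q ->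
  (\sum_(g' in [set g in AutQ Q' | res g \in G]) phi g' =
   \sum_(g in G) \sum_(T : 'M[F]_(db, da)) phi (extT g T))%N.
Proof.
move=> /subsetP GA.
rewrite (partition_big res (mem G)) /=; last by move=> g'; rewrite inE => /andP[].
apply: eq_bigr => g Gg.
rewrite (eq_bigl (mem [set X in AutQ Q' | res X == g])); last first.
  move=> X; rewrite !inE; case: eqP => [->|]; rewrite ?Gg ?andbT ?andbF //.
rewrite fiberA ?GA // big_imset /=; last by move=> T1 T2 _ _; apply: extT_inj.
by apply: eq_bigl => T; rewrite inE.
Qed.

Lemma sum_fiberE (B : {set qtuples Q}) (phi : qtuples Q' -> nat) : B \subset EndQ Q ->
  (\sum_(X' in [set X in EndQ Q' | res X \in B]) phi X' =
   \sum_(X in B) \sum_(T : 'M[F]_(db, da)) phi (extT X T))%N.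
Proof.
move=> /subsetP BE.
rewrite (partition_big res (mem B)) /=; last by move=> g'; rewrite inE => /andP[].
apply: eq_bigr => g Gg.
rewrite (eq_bigl (mem [set X in EndQ Q' | res X == g])); last first.
  move=> X; rewrite !inE; case: eqP => [->|]; rewrite ?Gg ?andbT ?andbF //.
have Eg : isEnd g by rewrite -inEnd BE.
rewrite fiberE // big_imset /=; last by move=> T1 T2 _ _; apply: extT_inj.
by apply: eq_bigl => T; rewrite inE.
Qed.

Definition Sset (g X : qtuples Q) :=
  [set S : 'M[F]_(da, db) | (X a *m S == S *m X b) && (g a *m S == S *m g b)].

Lemma stepC (G B : {set qtuples Q}) : G \subset AutQ Q -> B \subset EndQ Q ->
  (\sum_(g' in [set g in AutQ Q' | res g \in G])
      #|[set X' in [set X in EndQ Q' | res X \in B] | tupconj g' X' == X']| =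
   \sum_(g in G) (#|F| ^ (db * da) *
        \sum_(X in B) (tupconj g X == X) * #|Sset g X|))%N.
Proof.
move=> GA BE; rewrite sum_fiberA //; apply: eq_bigr => g Gg.
have Ag : g \in AutQ Q by apply: (subsetP GA).
rewrite (eq_bigr _ (fun T _ => card_set_sum _ _)) /=.
rewrite (eq_bigr _ (fun T _ => sum_fiberE _ BE)) /=.
rewrite exchange_big /= big_distrr /=; apply: eq_bigr => X XB.
under eq_bigr do under eq_bigr do rewrite fixcond //.
case: (tupconj g X =P X) => [E|_] /=; last first.
  by rewrite muln0; apply: big1 => T _; apply: big1.
rewrite mul1n /Sset -count_lin.
rewrite card_setT_sum -(pair_big xpredT xpredT
  (fun T Z => (T *m X a + g b *m Z == X b *m T + Z *m g a) : nat)) /=.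
by [].
Qed.

End Om.
Lemma sum_setI (T : finType) (A C : {set T}) (f : T -> nat) :
  (\sum_(x in A :&: C) f x = \sum_(x in A) (x \in C) * f x)%N.
Proof.
rewrite big_mkcond [RHS]big_mkcond; apply: eq_bigr => x _.
by rewrite inE; case: (x \in A); case: (x \in C); rewrite ?mul1n ?mul0n.
Qed.

Lemma sum_perm (T : finType) (A : {set T}) (c : T -> T) (phi : T -> nat) :
  {in A, forall x, c x \in A} -> {in A &, injective c} ->
  (\sum_(x in A) phi (c x) = \sum_(x in A) phi x)%N.
Proof.
move=> cA cinj; rewrite -big_imset //; apply: eq_bigl => y.
have -> : c @: A = A.
  apply/eqP; rewrite eqEcard card_in_imset // leqnn andbT.
  by apply/subsetP => z /imsetP[x Ax ->]; apply: cA.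
by [].
Qed.

Lemma unit_cancel_eq (F : fieldType) m k (A : 'M[F]_m) (B : 'M[F]_k) (M N : 'M[F]_(m, k)) :
  A \in unitmx -> B \in unitmx -> (invmx A *m M *m B == invmx A *m N *m B) = (M == N).
Proof.
move=> uA uB; apply/eqP/eqP => [E|-> //].
have := congr1 (fun z => A *m z *m invmx B) E.
by rewrite !mulmxA !mulmxK // !mulmxV // !mul1mx.
Qed.

Section StepB.
Variables (F : finFieldType) (Q : qrep F) (a b : qV Q) (G B : {set qtuples Q})
  (Xi : {set 'M[F]_(qdim a, qdim b)}).
Hypotheses (HGsub : G \subset AutQ Q) (HG : is_subgroup G) (HBsub : B \subset EndQ Q)
  (HBinv : forall g X, g \in G -> X \in B -> tupconj g X \in B)
  (HXi : is_orbit_transversal G Xi).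

Local Notation da := (qdim a).
Local Notation db := (qdim b).

Lemma GA g : g \in G -> g \in AutQ Q.
Proof. exact: (subsetP HGsub). Qed.
Lemma BE X : X \in B -> isEnd X.
Proof. by move=> XB; rewrite -inEnd (subsetP HBsub). Qed.
Lemma G1 : tup1 Q \in G. Proof. by case: HG. Qed.
Lemma GM g h : g \in G -> h \in G -> tupmul g h \in G. Proof. by case: HG => _ h1 _; apply: h1. Qed.
Lemma GI g : g \in G -> tupinv g \in G. Proof. by case: HG => _ _ h1; apply: h1. Qed.

Lemma isEnd_aa (S : 'M[F]_(da, db)) (X : qtuples Q) :
  @isEnd F (addArrow S) X = isEnd X && (X a *m S == S *m X b).
Proof.
apply/isEndP/andP.
- move=> h; split; last by apply/eqP; apply: (h None).
  by apply/isEndP => e; apply: (h (Some e)).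
- by case=> /isEndP h /eqP h0 [e|] //=; apply: h.
Qed.

Lemma homAct_fix (S : 'M[F]_(da, db)) g : g \in AutQ Q ->
  (homAct g S == S) = (g a *m S == S *m g b).
Proof.
move=> Ag; rewrite /homAct; apply/eqP/eqP => E.
  by rewrite -{1}E !mulmxA mulmxV ?Aut_unit // mul1mx.
by rewrite -mulmxA -E mulKmx ?Aut_unit.
Qed.

Lemma inAut_aa (S : 'M[F]_(da, db)) g : g \in AutQ Q ->
  (g \in @AutQ F (addArrow S)) = (homAct g S == S).
Proof.
move=> Ag; rewrite (@inAut F (addArrow S)) isEnd_aa homAct_fix // Aut_End //=.
by move: Ag; rewrite inAut => /andP[_ ->]; rewrite andbT.
Qed.

Lemma Stab_eq (S : 'M[F]_(da, db)) :
  [set g in G | homAct g S == S] = G :&: AutQ (addArrow S).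
Proof.
apply/setP => g; rewrite !inE; case Gg: (g \in G) => //=.
have Ag := GA Gg; rewrite homAct_fix //.
rewrite isEnd_aa Aut_End //=.
by move: Ag; rewrite inAut => /andP[_ ->]; rewrite andbT.
Qed.

Definition Psi (S : 'M[F]_(da, db)) :=
  (\sum_(g in G) \sum_(X in B)
     [&& homAct g S == S, tupconj g X == X & X a *m S == S *m X b])%N.

Lemma step1 (S : 'M[F]_(da, db)) :
  (gamma (G :&: AutQ (addArrow S)) (B :&: EndQ (addArrow S)) * #|G| =
   Psi S * #|[set homAct g S | g in G]|)%N.
Proof.
rewrite -(orbit_stabH S HGsub HG) Stab_eq mulnA.
congr (_ * _)%N.
rewrite (@burnsideQ F (addArrow S)); first last.
- move=> X g; rewrite !in_setI => /andP[XB XE] /andP[Gg Ag].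
  rewrite HBinv //=; move: XE; rewrite !inE => XE; exact: End_conj Ag XE.
- split.
  + by rewrite in_setI G1 (@Aut_1 F (addArrow S)).
  + move=> g h; rewrite !in_setI => /andP[Gg Ag] /andP[Gh Ah].
    by rewrite GM // (@Aut_mul F (addArrow S)).
  + move=> g; rewrite !in_setI => /andP[Gg Ag].
    by rewrite GI // (@Aut_inv F (addArrow S)).
- exact: subsetIr.
rewrite sum_setI /Psi; apply: eq_bigr => g Gg.
rewrite (inAut_aa S (GA Gg)).
rewrite card_set_sum sum_setI big_distrr /=.
apply: eq_bigr => X XB; rewrite inE isEnd_aa BE //=.
by case: (homAct g S == S); case: (tupconj g X == X); case: (X a *m S == S *m X b).
Qed.

Definition cG (h g : qtuples Q) := tupmul (tupmul (tupinv h) g) h.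

Lemma cG_in h g : h \in G -> g \in G -> cG h g \in G.
Proof. by move=> Gh Gg; rewrite /cG !GM ?GI. Qed.

Lemma cG_inj h : h \in G -> {in G &, injective (cG h)}.
Proof.
move=> Gh g1 g2 _ _ E.
have K g : tupmul h (tupmul (cG h g) (tupinv h)) = g.
  rewrite /cG -!tupmulA tupmulV ?GA // tupmul1 !tupmulA tupmulV ?GA //.
  by rewrite tup1mul.
by rewrite -(K g1) E K.
Qed.

Lemma conj_cancel h X : h \in G -> tupconj (tupinv h) (tupconj h X) = X.
Proof.
by move=> Gh; rewrite -tupconjM ?GA ?GI // tupmulV ?GA // tupconj1.
Qed.

Lemma homAct_cancel h (S : 'M[F]_(da, db)) : h \in G -> homAct (tupinv h) (homAct h S) = S.
Proof.
by move=> Gh; rewrite -homActM ?GA ?GI // tupmulV ?GA // homAct1.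
Qed.

Lemma Psi_inv h S : h \in G -> Psi (homAct h S) = Psi S.
Proof.
move=> Gh; rewrite /Psi.
rewrite -(@sum_perm _ G (cG h) (fun g => \sum_(X in B)
     [&& homAct g (homAct h S) == homAct h S, tupconj g X == X &
         X a *m homAct h S == homAct h S *m X b])%N); last first.
- exact: cG_inj.
- by move=> g Gg; apply: cG_in.
apply: eq_bigr => g Gg.
rewrite -(@sum_perm _ B (tupconj h) (fun X =>
     [&& homAct (cG h g) (homAct h S) == homAct h S, tupconj (cG h g) X == X &
         X a *m homAct h S == homAct h S *m X b] : nat)); last first.
- by move=> X1 X2 _ _ E; rewrite -(conj_cancel X1 Gh) E conj_cancel.
- by move=> X XB; apply: HBinv.
apply: eq_bigr => X XB.
have Ah := GA Gh; have Ag := GA Gg; have Aih := Aut_inv Ah.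
have E1 : (homAct (cG h g) (homAct h S) == homAct h S) = (homAct g S == S).
  rewrite /cG !homActM ?Aut_mul // homAct_cancel //.
  by rewrite /homAct unit_cancel_eq ?Aut_unit.
have E2 : (tupconj (cG h g) (tupconj h X) == tupconj h X) = (tupconj g X == X).
  rewrite /cG !tupconjM ?Aut_mul // conj_cancel //.
  apply/eqP/eqP => [E|->] //.
  by rewrite -(conj_cancel (tupconj g X) Gh) E conj_cancel.
have E3 : ((tupconj h X) a *m homAct h S == homAct h S *m (tupconj h X) b) =
          (X a *m S == S *m X b).
  rewrite !ffunE /homAct !mulmxA !mulmxK ?Aut_unit //.
  rewrite -!(mulmxA (invmx (h a))).
  rewrite (mulmxA (invmx (h a)) (X a *m S)) (mulmxA (invmx (h a)) (S *m X b)).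
  by rewrite unit_cancel_eq ?Aut_unit.
by congr [&& _, _ & _]; [exact: E1 | exact: E2 | exact: E3].
Qed.
Definition orbH (S : 'M[F]_(da, db)) := [set homAct g S | g in G].

Lemma orbH_in S : S \in orbH S.
Proof. by apply/imsetP; exists (tup1 Q); rewrite ?G1 ?homAct1. Qed.

Lemma orbH_eq S S' : S' \in orbH S -> orbH S' = orbH S.
Proof.
case/imsetP=> h Gh ->; apply/setP => T; apply/imsetP/imsetP.
- case=> g Gg ->; exists (tupmul h g); first by rewrite GM.
  by rewrite homActM ?GA.
- case=> g Gg ->; exists (tupmul (tupinv h) g); first by rewrite GM ?GI.
  by rewrite homActM ?GA ?GI // homAct_cancel.
Qed.

Lemma orbH_eqP S S' : (orbH S' == orbH S) = (S' \in orbH S).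
Proof.
apply/eqP/idP => [<-|]; first exact: orbH_in.
exact: orbH_eq.
Qed.

Lemma step2 : (\sum_(S' : 'M[F]_(da, db)) Psi S' = \sum_(S in Xi) Psi S * #|orbH S|)%N.
Proof.
case: HXi => Hex Huniq.
rewrite [LHS](eq_bigl (fun S => S \in [set: 'M[F]_(da, db)])); last by move=> S; rewrite inE.
rewrite (partition_big_imset orbH) /=.
have -> : orbH @: [set: 'M[F]_(da, db)] = orbH @: Xi.
  apply/setP => O; apply/imsetP/imsetP.
  - case=> S' _ ->; have [S SXi [g Gg ->]] := Hex S'.
    exists S => //; apply: orbH_eq; apply/imsetP; exists g.
    by [].
    by [].
  - by case=> S _ ->; exists S.
rewrite big_imset /=; last first.
  move=> S1 S2 X1 X2 E; apply: Huniq => //.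
  have : S2 \in orbH S1 by rewrite E orbH_in.
  by case/imsetP=> g Gg ->; exists g.
apply: eq_bigr => S SXi.
rewrite (eq_bigl (mem (orbH S))); last by move=> S'; rewrite inE orbH_eqP.
rewrite (eq_bigr (fun _ => Psi S)); first by rewrite sum_nat_const mulnC.
by move=> S' /imsetP[h Gh ->]; apply: Psi_inv.
Qed.

Lemma step3 : (\sum_(S' : 'M[F]_(da, db)) Psi S' =
  \sum_(g in G) \sum_(X in B) (tupconj g X == X) * #|@Sset F Q a b g X|)%N.
Proof.
rewrite /Psi exchange_big; apply: eq_bigr => g Gg.
rewrite exchange_big; apply: eq_bigr => X XB.
rewrite /Sset card_setT_sum big_distrr; apply: eq_bigr => S' _.
rewrite homAct_fix ?GA //.
by case: (tupconj g X == X); case: (X a *m S' == S' *m X b); case: (g a *m S' == S' *m g b).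
Qed.

End StepB.
Theorem mainTheorem10 (F : finFieldType) (Q : qrep F) (a b : qV Q)
  (n : nat) (i : 'M[F]_(@qdim _ Q a, n)) (p : 'M[F]_(n, @qdim _ Q b))
  (i_inj : row_free i) (p_surj : row_full p) (exact : (i == kermx p)%MS)
  (G : {set qtuples Q}) (HGsub : G \subset AutQ Q) (HG : is_subgroup G)
  (B : {set qtuples Q}) (HBsub : B \subset EndQ Q)
  (HBinv : forall g X, g \in G -> X \in B -> tupconj g X \in B)
  (Xi : {set 'M[F]_(@qdim _ Q a, @qdim _ Q b)}) (HXi : is_orbit_transversal G Xi) :
  gamma [set g in AutQ (Omega i p) | restrict g \in G]
        [set X in EndQ (Omega i p) | restrict X \in B]
  = (\sum_(S in Xi)
       gamma (G :&: AutQ (addArrow S)) (B :&: EndQ (addArrow S)))%N.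
Proof.
case/andP: exact => iK Ki.
have ip : i *m p = 0 by apply/eqP; rewrite -sub_kermx.
have [s sp] := row_fullP p_surj.
have [j0 ij0] := row_freeP i_inj.
pose j := (1%:M - p *m s) *m j0.
have ij : i *m j = 1%:M.
  by rewrite /j mulmxA mulmxBr mulmx1 mulmxA ip mul0mx subr0 ij0.
have sj : s *m j = 0.
  by rewrite /j mulmxA mulmxBr mulmx1 mulmxA sp mul1mx subrr mul0mx.
have jips : j *m i + p *m s = 1%:M.
  have Ek : (1%:M - p *m s <= kermx p)%MS.
    by rewrite sub_kermx mulmxBl mul1mx -mulmxA sp mulmx1 subrr.
  have /submxP[D ED] := submx_trans Ek Ki.
  rewrite /j ED -!mulmxA (mulmxA i j0 i) ij0 mul1mx -ED.
  by rewrite subrK.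
set K := (#|F| ^ (qdim b * qdim a))%N.
set G' := [set g in AutQ (Omega i p) | restrict g \in G].
set B' := [set X in EndQ (Omega i p) | restrict X \in B].
have G'P g : (g \in G') = (g \in AutQ (Omega i p)) && (restrict g \in G).
  by rewrite [in LHS]in_set.
have B'P X : (X \in B') = (X \in EndQ (Omega i p)) && (restrict X \in B).
  by rewrite [in LHS]in_set.
have G'A : G' \subset AutQ (Omega i p) by apply/subsetP => g; rewrite G'P => /andP[].
have G'sub : is_subgroup G'.
  case: HG => G1 GM GI; split.
  - by rewrite G'P Aut_1 res_1 G1.
  - move=> g h; rewrite !G'P => /andP[Ag Gg] /andP[Ah Gh].
    by rewrite Aut_mul // res_mul GM.
  - move=> g; rewrite !G'P => /andP[Ag Gg].
    by rewrite Aut_inv // res_inv GI.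
have B'inv : {in B' & G', forall x g, tupconj g x \in B'}.
  move=> X g; rewrite B'P G'P => /andP[EX BX] /andP[Ag Gg].
  by rewrite B'P inEnd End_conj -?inEnd // res_conj HBinv.
have H1 := burnsideQ G'A G'sub B'inv.
rewrite (stepC ij sp ip sj jips HGsub HBsub) in H1.
have H3 : #|G'| = (#|G| * K)%N.
  rewrite -sum1_card (sum_fiberA ij sp ip sj jips (fun _ => 1%N) HGsub).
  rewrite sum_nat_const; congr (_ * _)%N.
  by rewrite sum_nat_const card_mx muln1.
have H4 : ((\sum_(S in Xi) gamma (G :&: AutQ (addArrow S)) (B :&: EndQ (addArrow S))) * #|G|
   = \sum_(g in G) \sum_(X in B) (tupconj g X == X) * #|Sset a b g X|)%N.
  rewrite big_distrl /=.
  rewrite (eq_bigr _ (fun S _ => step1 HGsub HG HBsub HBinv S)).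
  by rewrite -(step2 HGsub HG HBinv HXi) step3.
rewrite H3 -big_distrr /= -H4 in H1.
have Gpos : (0 < #|G|)%N by apply/card_gt0P; exists (tup1 Q); case: HG.
have Kpos : (0 < K)%N by rewrite /K expn_gt0; apply/orP; left; apply/card_gt0P; exists 0.
have GKpos : (0 < #|G| * K)%N by rewrite muln_gt0 Gpos Kpos.
apply/eqP; rewrite -(eqn_pmul2r GKpos) H1.
by rewrite /K mulnCA (mulnC (_ ^ _)%N).
Qed.
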